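(* Let $X$ be a compact metrizable countable space and $f:X\to X$ a continuous function such that $(X,f)$ is transitive. If either $f^p$ is continuous for every $p\in\mathbb N^*$, or $|\omega_f(x)|=1$ for every accumulation point $x$ of $X$, then the Ellis semigroup $E(X,f)$ is homeomorphic to $X$.
   Context: $(X,f)$ is transitive if some point has dense orbit $\{f^n(x):n\in\mathbb N\}$. $\mathbb N^*$ is the set of free ultrafilters on $\mathbb N$; for $p\in\beta\mathbb N$ the $p$-iterate is $f^p(x)=p\text{-}\lim_{n\to\infty}f^n(x)$, where $y=p\text{-}\lim x_n$ means $\{n: x_n\in V\}\in p$ for every neighborhood $V$ of $y$. The Ellis semigroup $E(X,f)$ is the closure of $\{f^n:n\in\mathbb N\}$ in $X^X$ with the product (pointwise) topology; it equals $\{f^p:p\in\beta\mathbb N\}$. The $\omega$-limit set $\omega_f(x)$ is the set of limits of sequences $f^{n_k}(x)$ with $(n_k)$ strictly increasing. An accumulation point is a non-isolated point. *)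

(* Defs.v *)
From HB Require Import structures.
From mathcomp Require Import all_boot all_order all_algebra.
From mathcomp Require Import all_classical all_reals all_analysis.
From mathcomp Require Import Rstruct Rstruct_topology.
From Stdlib Require Import Rdefinitions.
Set Implicit Arguments. Unset Strict Implicit. Unset Printing Implicit Defensive.
Import Order.TTheory GRing.Theory Num.Theory.
Local Open Scope classical_set_scope.
Local Open Scope ring_scope.

Definition metrizable (X : topologicalType) : Prop :=
  exists d : X -> X -> Rdefinitions.R,
    [/\ (forall x y, d x y = 0 <-> x = y),
        (forall x y, d x y = d y x),
        (forall x y z, d x z <= d x y + d y z) &
        (forall x : X, nbhs x =
           [set A : set X | exists2 e : Rdefinitions.R, 0 < e &
                            [set y | d x y < e] `<=` A])].

Definition transitive_sys (X : topologicalType) (f : X -> X) : Prop :=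
  exists x : X, closure (range (fun n : nat => iter n f x)) = [set: X].

Definition free_ultrafilter (p : set_system nat) : Prop :=
  UltraFilter p /\ (forall A : set nat, finite_set A -> ~ p A).

Definition p_iterate (X : ptopologicalType) (f : X -> X) (p : set_system nat)
  : X -> X :=
  fun x => lim ((fun n : nat => iter n f x) @ p).

Definition omega_limit (X : topologicalType) (f : X -> X) (x : X) : set X :=
  [set y | exists n : nat -> nat, (forall k : nat, leq (n k).+1 (n k.+1)) /\
           ((fun k : nat => iter (n k) f x) @ \oo --> y)].

Definition accumulation_point (X : topologicalType) (x : X) : Prop :=
  limit_point [set: X] x.

Definition ellis (X : topologicalType) (f : X -> X) : set {ptws X -> X} :=
  closure [set (iter n f : {ptws X -> X}) | n in [set: nat]].

Definition homeomorphic_to (Y Z : topologicalType) (E : set Y) : Prop :=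
  exists (g : Y -> Z) (h : Z -> Y),
    [/\ {within E, continuous g}, continuous h,
        (forall z, E (h z)),
        (forall y, E y -> h (g y) = y) &
        (forall z, g (h z) = z)].

(* Main.v *)
Require Import Defs.
From HB Require Import structures.
From mathcomp Require Import all_boot all_order all_algebra.
From mathcomp Require Import all_classical all_reals all_analysis.
From mathcomp Require Import Rstruct Rstruct_topology.
From mathcomp Require Import lra zify.
Set Implicit Arguments. Unset Strict Implicit. Unset Printing Implicit Defensive.
Import Order.TTheory GRing.Theory Num.Theory.
Local Open Scope classical_set_scope.
Local Open Scope ring_scope.

Lemma iter_cont (X: topologicalType) (f : X -> X) : continuous f -> forall n, continuous (iter n f).
Proof.
move=> fc; elim=> [|n IH] x /=; first exact: cvg_id.
exact: (continuous_comp (IH x) (fc _)).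
Qed.

Lemma ptws_haus (X : topologicalType) : hausdorff_space X -> hausdorff_space {ptws X -> X}.
Proof. move=> h; exact: (@hausdorff_product X (fun _ => X) (fun _ => h)). Qed.

Lemma eval_cont (X : topologicalType) (y : X) : continuous (fun g : {ptws X -> X} => g y).
Proof. exact: (@proj_continuous X (fun _ => X) y). Qed.

Lemma closure_cont_image (Y Z : topologicalType) (g : Y -> Z) (S : set Y) y :
  continuous g -> closure S y -> closure (g @` S) (g y).
Proof.
move=> gc cy B nB; have := gc y B nB => /cy [z [Sz Bz]].
by exists (g z); split => //; exists z.
Qed.

Lemma closed_eqfun (Y X : topologicalType) (u v : Y -> X) :
  hausdorff_space X -> continuous u -> continuous v -> closed [set t | u t = v t].
Proof.
move=> hX uc vc t ct; apply: contrapT => /eqP uv.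
move: hX; rewrite open_hausdorff => /(_ _ _ uv) [[A B] /= [uA vB] [oA oB /eqP AB0]].
have nA : nbhs t (u @^-1` A) by apply: uc; apply: open_nbhs_nbhs; split => //; rewrite inE in uA.
have nB : nbhs t (v @^-1` B) by apply: vc; apply: open_nbhs_nbhs; split => //; rewrite inE in vB.
have [s [/= usvs [As Bs]]] := ct _ (filterI nA nB).
have : (A `&` B) (u s) by split => //; rewrite usvs.
by rewrite AB0.
Qed.

Lemma ellis_comm (X : topologicalType) (f : X -> X) : hausdorff_space X -> continuous f ->
  forall g, ellis f g -> forall y, g (f y) = f (g y).
Proof.
move=> hX fc g Eg y.
have cl : closed [set t : {ptws X -> X} | t (f y) = f (t y)].
  apply: closed_eqfun => //; first exact: eval_cont.
  move=> t; exact: (@continuous_comp _ _ _ (fun t : {ptws X -> X} => t y) f t (@eval_cont X y t) (fc _)).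
apply: cl; apply: closureS Eg => _ [n _ <-] /=.
by rewrite -iterSr iterS.
Qed.

Lemma ellis_comm_iter (X : topologicalType) (f : X -> X) : hausdorff_space X -> continuous f ->
  forall g, ellis f g -> forall n y, g (iter n f y) = iter n f (g y).
Proof.
move=> hX fc g Eg; elim=> [//|n IH] y /=.
by rewrite (ellis_comm hX fc Eg) IH.
Qed.

Definition tailE (X : topologicalType) (f : X -> X) (N : nat) : set {ptws X -> X} :=
  [set (iter n f : {ptws X -> X}) | n in [set n | (N <= n)%N]].

Lemma ellis_cases (X : topologicalType) (f : X -> X) : hausdorff_space X ->
  forall g, ellis f g -> (exists n, g = iter n f) \/ (forall N, closure (tailE f N) g).
Proof.
move=> hX g Eg; have [H|H] := pselect (forall N, closure (tailE f N) g); [by right|left].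
move/existsNP: H => [N nN].
have : closure ([set (iter n f : {ptws X -> X}) | n in [set n | (n < N)%N]] `|` tailE f N) g.
  apply: closureS Eg => _ [n _ <-]; case: (ltnP n N) => h; [left|right]; by exists n.
rewrite closureU => -[|//] cA.
have fA : finite_set [set (iter n f : {ptws X -> X}) | n in [set n | (n < N)%N]].
  exact/finite_image/finite_II.
have := (proj1 accessible_finite_set_closed) (hausdorff_accessible (ptws_haus hX)) _ fA g cA.
by move=> [n _ <-]; exists n.
Qed.

Lemma finite_nat_bound (A : set nat) : finite_set A -> exists M, forall n, A n -> (n < M)%N.
Proof.
move=> /finite_fsetP [B ->]; exists (\max_(i <- finmap.enum_fset B) i).+1 => n /= nB.
by rewrite ltnS; apply: (@leq_bigmax_seq _ _ xpredT id).
Qed.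

Lemma free_iterate (X : ptopologicalType) (f : X -> X) (g : {ptws X -> X}) :
  hausdorff_space X -> (forall N, closure (tailE f N) g) ->
  exists p, free_ultrafilter p /\ forall y, p_iterate f p y = g y.
Proof.
move=> hX cg.
pose D := [set i : set {ptws X -> X} * nat | nbhs g i.1].
pose B := fun i : set {ptws X -> X} * nat => [set n | (i.2 <= n)%N /\ i.1 (iter n f)].
have FF : Filter (filter_from D B).
  apply: filter_from_filter; first by exists (setT, 0%N); exact: filterT.
  move=> [U M] [V N] /= nU nV; exists (U `&` V, maxn M N); first exact: filterI.
  by move=> n /= []; rewrite geq_max => /andP [Mn Nn] [Un Vn].
have PF : ProperFilter (filter_from D B).
  apply: filter_from_proper => -[U N] /= nU.
  have [_ [[n /= Nn <-] Un]] := cg N U nU.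
  by exists n.
have [p [up Fp]] := ultraFilterLemma PF.
exists p; split.
  split => // A /finite_nat_bound [M AM] pA.
  have pM : p [set n | (M <= n)%N].
    by apply: Fp; exists (setT, M); [exact: filterT | move=> n []].
  have := filterI pA pM.
  have -> : A `&` [set n | (M <= n)%N] = set0.
    by apply/seteqP; split => // n [/AM]; rewrite /= leqNgt => /negP.
  by move=> /(_ _); apply: (@filter_not_empty _ p _).
move=> y; rewrite /p_iterate; apply: (cvg_lim hX).
move=> V nV; apply: Fp; exists ([set t : {ptws X -> X} | V (t y)], 0%N).
  exact: (@eval_cont X y g V nV).
by move=> n [].
Qed.

Lemma inv_small (e : Rdefinitions.R) : 0 < e -> exists K, forall k, (K <= k)%N -> (k.+1%:R : Rdefinitions.R)^-1 < e.
Proof.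
move=> e0; exists (Num.truncn e^-1) => k Kk.
rewrite invf_plt ?ltr0Sn //.
apply: (lt_le_trans (truncnS_gt _)).
by rewrite ler_nat ltnS. by rewrite posrE ltr0Sn.
Qed.

Lemma C_sub_omega (X : topologicalType) (f : X -> X) (d : X -> X -> Rdefinitions.R) y z :
  (forall x : X, nbhs x = [set A : set X | exists2 e : Rdefinitions.R, 0 < e & [set w | d x w < e] `<=` A]) ->
  (forall N, closure [set iter n f y | n in [set n | (N <= n)%N]] z) -> omega_limit f y z.
Proof.
move=> dn cz.
have step : forall (k N : nat), {n | (N <= n)%N /\ d z (iter n f y) < (k.+1%:R)^-1}.
  move=> k N; apply: cid.
  have : nbhs z [set w | d z w < (k.+1%:R)^-1].
    by rewrite dn; exists (k.+1%:R)^-1 => //; rewrite invr_gt0 ltr0Sn.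
  move=> /(cz N) [_ [[n /= Nn <-] dn']]; by exists n.
pose s := fix s k := match k with 0 => proj1_sig (step 0%N 0%N) | k.+1 => proj1_sig (step k.+1 (s k).+1) end.
exists s; split.
  by move=> k /=; case: (proj2_sig (step k.+1 (s k).+1)).
move=> V; rewrite dn => -[e e0 eV].
have [K HK] := inv_small e0.
exists K => // k /= Kk; apply: eV => /=.
apply: lt_trans (HK _ Kk).
by case: k {Kk} => [|k] /=; [case: (proj2_sig (step 0%N 0%N)) | case: (proj2_sig (step k.+1 (s k).+1))].
Qed.

Lemma orbit_noper (X : topologicalType) (f : X -> X) x0 y : hausdorff_space X ->
  closure (range (fun n => iter n f x0)) = setT -> ~ range (fun n => iter n f x0) y ->
  forall a b, iter a f x0 = iter b f x0 -> a = b.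
Proof.
move=> hX dense nOy.
suff H : forall a b, (a < b)%N -> iter a f x0 = iter b f x0 -> False.
  move=> a b e; case: (ltngtP a b) => // h; [exfalso; exact: H h e | exfalso; exact: H h (esym e)].
move=> a b ab e.
have sub : forall n, exists2 m, (m < b)%N & iter n f x0 = iter m f x0.
  elim/ltn_ind => n IH; case: (ltnP n b) => nb; first by exists n.
  have -> : iter n f x0 = iter ((n - b) + a) f x0 by rewrite iterD e -iterD subnK.
  by apply: IH; lia.
have fO : finite_set (range (fun n => iter n f x0)).
  apply: (@sub_finite_set _ _ [set iter n f x0 | n in `I_b]); last exact/finite_image/finite_II.
  by move=> _ [n _ <-]; have [m mb ->] := sub n; exists m.
have cO := (proj1 accessible_finite_set_closed) (hausdorff_accessible hX) _ fO.
apply: nOy; apply: cO; rewrite dense //.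
Qed.

Lemma nacc_iso (X : topologicalType) (u : X) : ~ accumulation_point u ->
  exists2 U, nbhs u U & forall v, U v -> v = u.
Proof.
move=> nacc; apply: contrapT => H; apply: nacc => U nU.
apply: contrapT => nex; apply: H; exists U => // v Uv; apply: contrapT => vu.
by apply: nex; exists v; split => //; exact/eqP.
Qed.

Lemma metric_haus (X : topologicalType) : metrizable X -> hausdorff_space X.
Proof.
case=> d [d0 dsym dtri dn] p q clpq.
apply: contrapT => pq.
have dge0 x y : 0 <= d x y.
  have := dtri x y x; rewrite (proj2 (d0 x x) erefl) (dsym y x); lra.
have dpos : 0 < d p q.
  rewrite lt_neqAle dge0 andbT; apply/eqP => /esym /d0; exact: pq.
have e2 : 0 < d p q / 2 by lra.
have [z [/= zp zq]] : [set y | d p y < d p q / 2] `&` [set y | d q y < d p q / 2] !=set0.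
  apply: clpq; rewrite dn; exists (d p q / 2) => //.
have := dtri p z q; rewrite (dsym z q); lra.
Qed.

Lemma free_C (X : topologicalType) (f : X -> X) (g : {ptws X -> X}) :
  (forall N, closure (tailE f N) g) ->
  forall u N, closure [set iter n f u | n in [set n | (N <= n)%N]] (g u).
Proof.
move=> cg u N; have := closure_cont_image (@eval_cont X u) (cg N).
by apply: closureS => _ [_ [n Nn <-] <-]; exists n.
Qed.
Arguments free_C {X f g} _ u N.

Definition metric_nbhs (X : topologicalType) (d : X -> X -> Rdefinitions.R) :=
  forall x : X, nbhs x = [set A : set X | exists2 e : Rdefinitions.R, 0 < e & [set w | d x w < e] `<=` A].

Lemma mixed_false (X : topologicalType) (f : X -> X) x0 y d (h : {ptws X -> X}) m :
  hausdorff_space X -> continuous f -> 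
  closure (range (fun n => iter n f x0)) = setT -> @metric_nbhs X d ->
  (forall x : X, accumulation_point x -> exists y : X, omega_limit f x = [set y]) ->
  ~ range (fun n => iter n f x0) y ->
  ellis f h -> (forall N, closure (tailE f N) h) -> iter m f x0 = h x0 -> False.
Proof.
move=> hX fc dense dn H2 nOy Eh fh e.
pose w := iter m f x0.
have hw : h w = iter (m + m) f x0 by rewrite /w (ellis_comm_iter hX fc Eh) -e iterD.
have hfw : h (f w) = iter (m + m).+1 f x0 by rewrite (ellis_comm hX fc Eh) hw.
have noper := orbit_noper hX dense nOy.
have [acc|nacc] := pselect (accumulation_point w).
  have [z oz] := H2 w acc.
  have z1 : h w = z.
    have : omega_limit f w (h w) by apply: (C_sub_omega dn); exact: free_C.
    by rewrite oz.
  have z2 : h (f w) = z.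
    have : omega_limit f w (h (f w)).
      apply: (C_sub_omega dn) => N; have := free_C fh (f w) N.
      by apply: closureS => _ [n Nn <-]; exists n.+1; [rewrite /=; exact: leqW | rewrite iterSr].
    by rewrite oz.
  have := noper (m + m).+1 (m + m); rewrite -hfw -hw z1 z2 => /(_ erefl).
  by move=> H; lia.
have [U nU iso] := nacc_iso nacc.
have := free_C fh x0 m.+1; rewrite -e => /(_ U nU) [_ [[n /= mn <-] Un]].
have := noper n m (iso _ Un) => nm.
by move: mn; rewrite nm ltnn.
Qed.

Lemma inj_case2 (X : topologicalType) (f : X -> X) x0 d (g h : {ptws X -> X}) :
  hausdorff_space X -> continuous f -> 
  closure (range (fun n => iter n f x0)) = setT -> @metric_nbhs X d ->
  (forall x : X, accumulation_point x -> exists y : X, omega_limit f x = [set y]) ->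
  ellis f g -> ellis f h -> g x0 = h x0 -> g = h.
Proof.
move=> hX fc dense dn H2 Eg Eh e.
apply: functional_extensionality_dep => y.
have agree n : g (iter n f x0) = h (iter n f x0).
  by rewrite (ellis_comm_iter hX fc Eg) (ellis_comm_iter hX fc Eh) e.
have [[n _ <-]|nOy] := pselect (range (fun n => iter n f x0) y); first exact: agree.
have accy : accumulation_point y.
  apply: contrapT => /nacc_iso [U nU iso].
  have : closure (range (fun n => iter n f x0)) y by rewrite dense.
  move=> /(_ U nU) [_ [[n _ <-] Un]].
  by apply: nOy; exists n => //; exact: iso.
have [z oz] := H2 y accy.
have fom (k : {ptws X -> X}) : (forall N, closure (tailE f N) k) -> k y = z.
  move=> fk; have : omega_limit f y (k y) by apply: (C_sub_omega dn); exact: free_C.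
  by rewrite oz.
case: (ellis_cases hX Eg) => [[m gm]|fg]; case: (ellis_cases hX Eh) => [[k hk]|fh].
- move: e; rewrite gm hk => /(orbit_noper hX dense nOy) ->; by [].
- exfalso; apply: (mixed_false hX fc dense dn H2 nOy Eh fh (m:=m)); by rewrite -e gm.
- exfalso; apply: (mixed_false hX fc dense dn H2 nOy Eg fg (m:=k)); by rewrite e hk.
- by rewrite (fom _ fg) (fom _ fh).
Qed.

Lemma ellis_cont1 (X : ptopologicalType) (f : X -> X) : hausdorff_space X -> continuous f ->
  (forall p, free_ultrafilter p -> continuous (p_iterate f p)) ->
  forall g : {ptws X -> X}, ellis f g -> continuous (g : X -> X).
Proof.
move=> hX fc H g Eg; case: (ellis_cases hX Eg) => [[n ->]|fg]; first exact: iter_cont.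
have [p [fp pg]] := free_iterate hX fg.
have -> : (g : X -> X) = p_iterate f p by apply: funext => y; rewrite pg.
exact: H.
Qed.

Lemma inj_case1 (X : ptopologicalType) (f : X -> X) x0 (g h : {ptws X -> X}) :
  hausdorff_space X -> continuous f ->
  closure (range (fun n => iter n f x0)) = setT ->
  (forall p, free_ultrafilter p -> continuous (p_iterate f p)) ->
  ellis f g -> ellis f h -> g x0 = h x0 -> g = h.
Proof.
move=> hX fc dense H Eg Eh e.
have gc := ellis_cont1 hX fc H Eg; have hc := ellis_cont1 hX fc H Eh.
have cl := closed_eqfun hX gc hc.
apply: functional_extensionality_dep => y; apply: cl.
have : closure (range (fun n => iter n f x0)) y by rewrite dense.
apply: closureS => _ [n _ <-] /=.
by rewrite (ellis_comm_iter hX fc Eg) (ellis_comm_iter hX fc Eh) e.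
Qed.

Lemma ptws_compact (X : topologicalType) : compact [set: X] -> compact [set: {ptws X -> X}].
Proof.
move=> cX; have := @tychonoff X (fun _ => X) (fun _ => setT) (fun _ => cX).
suff -> : [set f : {ptws X -> X} | forall i, [set: X] (f i)] = setT by [].
by apply/seteqP; split.
Qed.

Theorem theorem4p2 (X : ptopologicalType) (f : X -> X) :
  compact [set: X] -> metrizable X -> countable [set: X] ->
  continuous f -> transitive_sys f ->
  ((forall p : set_system nat, free_ultrafilter p -> continuous (p_iterate f p))
   \/ (forall x : X, accumulation_point x ->
         exists y : X, omega_limit f x = [set y])) ->
  homeomorphic_to X (ellis f).
Proof.
move=> cX mX _ fc [x0 dense] H.
have hX := metric_haus mX.
have inj : forall g h : {ptws X -> X}, ellis f g -> ellis f h -> g x0 = h x0 -> g = h.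
  case: H => [H1|H2] g h.
    exact: inj_case1 hX fc dense H1.
  case: mX => d [_ _ _ dn]; exact: (inj_case2 hX fc dense dn H2).
pose ev := fun g : {ptws X -> X} => g x0.
have evc : continuous ev := @eval_cont X x0.
have Ecomp : compact (ellis f).
  apply: (subclosed_compact _ (ptws_compact cX)) => //; exact: closed_closure.
have surj : forall z, exists2 g, ellis f g & ev g = z.
  move=> z.
  have cI : closed (ev @` ellis f).
    exact: (compact_closed hX (continuous_compact (continuous_subspaceT evc) Ecomp)).
  have : closure (range (fun n => iter n f x0)) z by rewrite dense.
  have : closure (range (fun n => iter n f x0)) `<=` ev @` ellis f.
    move=> w cw; apply: cI; move: cw; apply: closureS => _ [n _ <-].
    by exists (iter n f) => //; apply: subset_closure; exists n.
  by move=> /[apply] -[g Eg <-]; exists g.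
pose hinv z := projT1 (cid2 (surj z)).
have hE z : ellis f (hinv z) by rewrite /hinv; case: cid2.
have hev z : ev (hinv z) = z by rewrite /hinv; case: cid2.
exists ev, hinv; split => //.
- exact: continuous_subspaceT.
- apply/continuous_closedP => C cC.
  suff -> : hinv @^-1` C = ev @` (C `&` ellis f).
    apply: (compact_closed hX); apply: (continuous_compact (continuous_subspaceT evc)).
    apply: (subclosed_compact _ Ecomp) => //; first by apply: closedI => //; exact: closed_closure.
  rewrite eqEsubset; split => [z Cz|z [g [Cg Eg] <-]].
    by exists (hinv z) => //; split.
  by rewrite /= (inj _ _ (hE _) Eg (hev _)).
- by move=> g Eg; exact: (inj _ _ (hE _) Eg (hev _)).
Qed.
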